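(* Let $q>1$ be a prime number and $0<j\le q$. Then: (1) $\bar{\mathsf{L}}^j_q$ is strongly maximal with respect to $\mathsf{CPL}$, and its consequence relation is the least structural finitary consequence relation extending $\vDash_{\mathsf{L}^j_q}$ that validates the rule $j(\varphi\wedge\neg\varphi)/(\psi\vee\neg\psi)^q$ (for all formulas $\varphi,\psi$); (2) $\mathsf{L}^j_q$ is strongly maximal with respect to $\bar{\mathsf{L}}^j_q$.
   Context: $\mathbf{ŁV}_{n+1}=(\{0,\frac1n,\dots,1\},\neg,\to)$ with $\neg x=1-x$, $x\to y=\min\{1,1-x+y\}$; derived: $x\oplus y=\neg x\to y$, $x\otimes y=\neg(x\to\neg y)$, $x\vee y=(x\to y)\to y$, $x\wedge y=\neg(\neg x\vee\neg y)$; $j\alpha$ is $\alpha\oplus\cdots\oplus\alpha$ ($j$ times) and $\alpha^q$ is $\alpha\otimes\cdots\otimes\alpha$ ($q$ times). $F_{j/q}=\{x:x\ge j/q\}$; $\mathsf{L}^j_q=\langle\mathbf{ŁV}_{q+1},F_{j/q}\rangle$; $\bar{\mathsf{L}}^j_q=\langle\mathbf{ŁV}_{q+1}\times\mathbf{ŁV}_2,F_{j/q}\times\{1\}\rangle$; $\mathsf{CPL}=\langle\mathbf{ŁV}_2,\{1\}\rangle$ over $\{\neg,\to\}$. Matrix consequence: every evaluation sending the premises into the designated set sends the conclusion into it. $L_1$ is strongly maximal w.r.t. $L_2$ if ${\vdash_{L_1}}\subsetneq{\vdash_{L_2}}$ and for every finitary rule $\varphi_1,\dots,\varphi_k/\psi$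 with $\varphi_1,\dots,\varphi_k\vdash_{L_2}\psi$ but $\varphi_1,\dots,\varphi_k\nvdash_{L_1}\psi$, the least consequence relation extending $\vdash_{L_1}$ in which $\sigma(\varphi_1),\dots,\sigma(\varphi_k)\vdash\sigma(\psi)$ for all substitutions $\sigma$ coincides with $\vdash_{L_2}$. *)

(* Defs.v *)
From mathcomp Require Import all_boot.
From Stdlib Require Import List.
Set Implicit Arguments. Unset Strict Implicit. Unset Printing Implicit Defensive.

Inductive form : Type :=
| Var : nat -> form
| Neg : form -> form
| Imp : form -> form -> form.

Definition oplus (a b : form) : form := Imp (Neg a) b.
Definition otimes (a b : form) : form := Neg (Imp a (Neg b)).
Definition vee (a b : form) : form := Imp (Imp a b) b.
Definition wedge (a b : form) : form := Neg (vee (Neg a) (Neg b)).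

(* j a = a (+) ... (+) a  (j times, j >= 1; 0 a is the constant 0). *)
Fixpoint nmult (n : nat) (a : form) : form :=
  match n with
  | 0 => Neg (Imp a a)
  | 1 => a
  | S m => oplus a (nmult m a)
  end.

(* a^q = a (x) ... (x) a  (q times, q >= 1; a^0 is the constant 1). *)
Fixpoint npow (n : nat) (a : form) : form :=
  match n with
  | 0 => Imp a a
  | 1 => a
  | S m => otimes a (npow m a)
  end.

Fixpoint subst (s : nat -> form) (f : form) : form :=
  match f with
  | Var n => s n
  | Neg a => Neg (subst s a)
  | Imp a b => Imp (subst s a) (subst s b)
  end.

(* Evaluation in LV_{q+1}: the value k (0 <= k <= q) encodes k/q.
   neg x = 1 - x, x -> y = min(1, 1 - x + y). *)
Fixpoint ev (q : nat) (v : nat -> nat) (f : form) : nat :=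
  match f with
  | Var n => v n
  | Neg a => q - ev q v a
  | Imp a b => minn q (q - ev q v a + ev q v b)
  end.

Definition cons_rel := (form -> Prop) -> form -> Prop.

Definition setOf (l : list form) : form -> Prop := fun x => In x l.

(* L^j_q = < LV_{q+1}, F_{j/q} >: designated values x >= j/q. *)
Definition Lmat (q j : nat) : cons_rel := fun G phi =>
  forall v : nat -> nat, (forall n, v n <= q) ->
    (forall psi, G psi -> j <= ev q v psi) -> j <= ev q v phi.

(* Lbar^j_q = < LV_{q+1} x LV_2, F_{j/q} x {1} >; operations are componentwise,
   so a valuation is a pair (v,w) and the value of a formula is (ev q v, ev 1 w). *)
Definition Lbar (q j : nat) : cons_rel := fun G phi =>
  forall (v w : nat -> nat), (forall n, v n <= q) -> (forall n, w n <= 1) ->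
    (forall psi, G psi -> j <= ev q v psi /\ 1 <= ev 1 w psi) ->
    j <= ev q v phi /\ 1 <= ev 1 w phi.

Definition CPL : cons_rel := Lmat 1 1.

Definition cons_sub (C D : cons_rel) : Prop := forall G phi, C G phi -> D G phi.

Definition is_cons (C : cons_rel) : Prop :=
  (forall G phi, G phi -> C G phi) /\
  (forall G D phi, (forall x, G x -> D x) -> C G phi -> C D phi) /\
  (forall G D phi, (forall x, D x -> C G x) ->
      C (fun x => G x \/ D x) phi -> C G phi).

Definition image (s : nat -> form) (G : form -> Prop) : form -> Prop :=
  fun x => exists y, G y /\ x = subst s y.

Definition structural (C : cons_rel) : Prop :=
  forall s G phi, C G phi -> C (image s G) (subst s phi).

Definition finitary (C : cons_rel) : Prop :=
  forall G phi, C G phi -> exists l : list form, (forall x, In x l -> G x) /\ C (setOf l) phi.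

Definition least_ext (L : cons_rel) (prems : list form) (concl : form) : cons_rel :=
  fun G phi => forall C : cons_rel, is_cons C -> cons_sub L C ->
    (forall s, C (setOf (map (subst s) prems)) (subst s concl)) -> C G phi.

Definition strongly_maximal (L1 L2 : cons_rel) : Prop :=
  (cons_sub L1 L2 /\ ~ cons_sub L2 L1) /\
  forall (prems : list form) (concl : form),
    L2 (setOf prems) concl -> ~ L1 (setOf prems) concl ->
    forall G phi, least_ext L1 prems concl G phi <-> L2 G phi.

Definition validates_rule (q j : nat) (C : cons_rel) : Prop :=
  forall phi psi, C (setOf [:: nmult j (wedge phi (Neg phi))])
                    (npow q (vee psi (Neg psi))).

(* Main.v *)
Require Import Defs.
From mathcomp Require Import all_boot zify.
From Stdlib Require Import List Classical ClassicalEpsilon.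
Set Implicit Arguments. Unset Strict Implicit.

Definition bnd q (v : nat -> nat) := forall n, v n <= q.

Lemma ev_le q v f : bnd q v -> ev q v f <= q.
Proof. move=> hv; elim: f => [n|a IH|a IHa b IHb] /=; [exact: hv| lia | lia]. Qed.

Lemma ev_subst q v s f : ev q v (subst s f) = ev q (fun n => ev q v (s n)) f.
Proof. elim: f => [n|a IH|a IHa b IHb] //=; by rewrite ?IH ?IHa ?IHb. Qed.

Fixpoint maxvar (f : form) : nat :=
  match f with Var n => n | Neg a => maxvar a | Imp a b => maxn (maxvar a) (maxvar b) end.

Lemma ev_local q v v' f : (forall n, n <= maxvar f -> v n = v' n) -> ev q v f = ev q v' f.
Proof.
elim: f => [n|a IH|a IHa b IHb] /= h; first exact: h.
  by rewrite IH.
rewrite IHa ?IHb // => n hn; apply: h; lia.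
Qed.

Lemma ev_bool q w f : bnd 1 w -> ev q (fun n => q * w n) f = q * ev 1 w f.
Proof.
move=> hw; elim: f => [n|a IH|a IHa b IHb] //=.
  rewrite IH; have := ev_le a hw; nia.
rewrite IHa IHb; have := ev_le a hw; have := ev_le b hw.
case: (ev 1 w a) => [|[|x]]; case: (ev 1 w b) => [|[|y]] //= _ _; nia.
Qed.

Lemma ev_nmult q v n a : ev q v a <= q -> ev q v (nmult n a) = minn q (n * ev q v a).
Proof.
move=> h; elim: n => [|[|m] IH] /=; first lia. lia.
move: IH => /= ->; nia.
Qed.

Lemma ev_npow q v n a : ev q v a <= q -> ev q v (npow n.+1 a) = n.+1 * ev q v a - n * q.
Proof.
move=> h; elim: n => [|m IH] /=; first lia.
move: IH; rewrite [npow _ _]/= => ->.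
case: m => [|m] /=; nia.
Qed.

Lemma ev_vee q v a b : bnd q v -> ev q v (vee a b) = maxn (ev q v a) (ev q v b).
Proof. move=> hv /=; have := ev_le a hv; have := ev_le b hv; lia. Qed.

Lemma ev_wedge q v a b : bnd q v -> ev q v (wedge a b) = minn (ev q v a) (ev q v b).
Proof. move=> hv /=; have := ev_le a hv; have := ev_le b hv; lia. Qed.
Definition bot := Neg (Imp (Var 0) (Var 0)).
Definition Hf q (y : form) := wedge y (Neg (nmult (q-1) y)).
Fixpoint eterm (fuel : nat) (A B : form) (a b : nat) : form :=
  match fuel with
  | 0 => A
  | S f => if b == 0 then A else eterm f B (Neg (Imp A (nmult (a %/ b) B))) b (a %% b)
  end.
Definition mk q k (p : form) := eterm q.+1 (Imp p p) p q k.
Definition bigvee (l : list form) := List.fold_right vee bot l.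
Definition eform q p := bigvee (List.map (fun k => Hf q (mk q k p)) (iota 1 (q-1))).

Lemma bigvee_cons y l : bigvee (y :: l) = vee y (bigvee l). Proof. by []. Qed.

Lemma bigvee_ge q v l x : bnd q v -> In x l -> ev q v x <= ev q v (bigvee l).
Proof.
move=> hv; elim: l => [//|y l IH] [->|hx]; rewrite bigvee_cons ev_vee //; first lia.
have := IH hx; lia.
Qed.

Lemma bigvee_le q v l B : bnd q v -> (forall x, In x l -> ev q v x <= B) -> ev q v (bigvee l) <= B.
Proof.
move=> hv; elim: l => [|y l IH] h; first by rewrite /= ; lia.
rewrite bigvee_cons ev_vee // geq_max h /=; last by left.
by apply: IH => x hx; apply: h; right.
Qed.

Lemma ev_eterm q v fuel A B a b : bnd q v -> ev q v A = a -> ev q v B = b -> a <= q -> b <= q -> b < fuel ->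
  ev q v (eterm fuel A B a b) = gcdn a b.
Proof.
move=> hv; elim: fuel A B a b => [//|f IH] A B a b hA hB ha hb hf /=.
case: eqP => [b0|b0]; first by rewrite hA b0 gcdn0.
rewrite (IH _ _ b (a %% b)) //.
- by rewrite gcdnC gcdn_modl.
- rewrite /= ev_nmult; last by rewrite hB.
  rewrite hA hB.
  have hd := divn_eq a b.
  have : a %/ b * b <= a by rewrite leq_divM.
  lia.
- have := ltn_pmod a (d:=b); lia.
- have := ltn_pmod a (d:=b); lia.
Qed.

Definition isB q x := (x == 0) || (x == q).

Lemma eterm_bool q v fuel A B a b : bnd q v -> isB q (ev q v A) -> isB q (ev q v B) ->
  isB q (ev q v (eterm fuel A B a b)).
Proof.
move=> hv; elim: fuel A B a b => [//|f IH] A B a b hA hB /=.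
case: eqP => _ //; apply: IH => //.
rewrite /= ev_nmult; last exact: ev_le.
move: hA hB; rewrite /isB; case/orP => /eqP ->; case/orP => /eqP ->; apply/orP; 
 case: (a %/ b) => [|n]; lia.
Qed.

Lemma ev_mk q v k p : bnd q v -> prime q -> ev q v p = k -> 0 < k < q -> ev q v (mk q k p) = 1.
Proof.
move=> hv pq hp hk; rewrite /mk (ev_eterm (a:=q) (b:=k)) //=.
- have : coprime q k by rewrite prime_coprime // ; apply/negP => /dvdn_leq; lia.
  by move/eqP.
all: try (have := ev_le p hv); lia.
Qed.

Lemma ev_Hf q v y : bnd q v -> 1 < q -> ev q v (Hf q y) <= 1.
Proof.
move=> hv hq; rewrite /Hf ev_wedge //= ev_nmult; last exact: ev_le.
have := ev_le y hv; case: (ev q v y) => [|[|z]] _; nia.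
Qed.

Lemma ev_Hf1 q v y : bnd q v -> 1 < q -> ev q v y = 1 -> ev q v (Hf q y) = 1.
Proof.
move=> hv hq h; rewrite /Hf ev_wedge //= ev_nmult; last exact: ev_le.
rewrite h; lia.
Qed.

Lemma ev_HfB q v y : bnd q v -> 1 < q -> isB q (ev q v y) -> ev q v (Hf q y) = 0.
Proof.
move=> hv hq; rewrite /Hf ev_wedge //= ev_nmult; last exact: ev_le.
rewrite /isB; case/orP => /eqP ->; nia.
Qed.

Lemma In_mem (T : eqType) (x : T) s : x \in s -> In x s.
Proof. elim: s => [//|y s IH]; rewrite inE => /orP [/eqP ->|h]; [by left|right; exact: IH]. Qed.

Lemma ev_e_nonbool q v p : bnd q v -> prime q -> 1 < q -> 0 < ev q v p < q -> ev q v (eform q p) = 1.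
Proof.
move=> hv pq hq hp; apply/eqP; rewrite eqn_leq; apply/andP; split.
  apply: bigvee_le => // x /in_map_iff [k [<- _]]; exact: ev_Hf.
rewrite -(ev_Hf1 (y := mk q (ev q v p) p) hv hq); last exact: ev_mk.
apply: bigvee_ge => //; apply/in_map_iff; exists (ev q v p); split => //.
apply: In_mem; rewrite mem_iota; apply/andP; lia.
Qed.

Lemma ev_Imp_self q v p : bnd q v -> ev q v (Imp p p) = q.
Proof. move=> hv /=; have := ev_le p hv; lia. Qed.

Lemma ev_e_bool q v p : bnd q v -> 1 < q -> isB q (ev q v p) -> ev q v (eform q p) = 0.
Proof.
move=> hv hq hp; apply/eqP; rewrite -leqn0; apply: bigvee_le => // x /in_map_iff [k [<- _]].
rewrite ev_HfB //; apply: eterm_bool => //; by rewrite ev_Imp_self // /isB eqxx orbT.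
Qed.

Lemma bnd_q q w : bnd 1 w -> bnd q (fun n => q * w n).
Proof. move=> hw n; have := hw n; nia. Qed.

Lemma ev_e_1 q w p : bnd 1 w -> 1 < q -> ev 1 w (eform q p) = 0.
Proof.
move=> hw hq; have := ev_bool q (eform q p) hw.
rewrite ev_e_bool //; first nia. exact: bnd_q.
rewrite ev_bool // /isB; have := ev_le p hw; case: (ev 1 w p) => [|[|]] //= _; rewrite ?muln0 ?muln1 eqxx ?orbT //.
Qed.

Lemma cut1 C G D phi : is_cons C -> (forall x, D x -> C G x) -> C D phi -> C G phi.
Proof.
move=> [hr [hm hc]] hD h; apply: (hc G D) => //.
by apply: (hm D) => // x hx; right.
Qed.

Lemma Lmat_cons q j : is_cons (Lmat q j).
Proof.
split; [|split].
- by move=> G phi hG v hv h; apply: h.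
- by move=> G D phi hGD h v hv hD; apply: h => // x hx; apply: hD; apply: hGD.
- move=> G D phi hD h v hv hG; apply: h => // x [hx|hx]; [exact: hG| exact: hD].
Qed.

Lemma Lbar_cons q j : is_cons (Lbar q j).
Proof.
split; [|split].
- by move=> G phi hG v w hv hw h; apply: h.
- by move=> G D phi hGD h v w hv hw hD; apply: h => // x hx; apply: hD; apply: hGD.
- move=> G D phi hD h v w hv hw hG; apply: h => // x [hx|hx]; [exact: hG| exact: hD].
Qed.

Lemma bnd_ev q v s : bnd q v -> bnd q (fun n => ev q v (s n)).
Proof. by move=> hv n; apply: ev_le. Qed.

Lemma Lmat_struct q j : structural (Lmat q j).
Proof.
move=> s G phi h v hv hG; rewrite ev_subst; apply: h; first exact: bnd_ev.
by move=> x hx; rewrite -ev_subst; apply: hG; exists x.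
Qed.

Lemma Lbar_struct q j : structural (Lbar q j).
Proof.
move=> s G phi h v w hv hw hG; rewrite !ev_subst; apply: h; try exact: bnd_ev.
by move=> x hx; rewrite -!ev_subst; apply: hG; exists x.
Qed.

Lemma Lmat_Lbar q j : 0 < j <= q -> cons_sub (Lmat q j) (Lbar q j).
Proof.
move=> hj G phi h v w hv hw hG; split.
  by apply: h => // x /hG [].
have : j <= ev q (fun n => q * w n) phi.
  apply: h; first exact: bnd_q.
  move=> x /hG [_ h1]; rewrite ev_bool //; nia.
rewrite ev_bool //; nia.
Qed.

Lemma Lbar_CPL q j : 0 < j <= q -> cons_sub (Lbar q j) CPL.
Proof.
move=> hj G phi h v hv hG.
have [] := h (fun n => q * v n) v (bnd_q q hv) hv => //.
move=> x hx; rewrite ev_bool //; have := hG x hx; split => //; nia.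
Qed.

Lemma Lbar_char q j G phi : Lbar q j G phi ->
  Lmat q j G phi \/ (forall w, bnd 1 w -> ~ forall x, G x -> 1 <= ev 1 w x).
Proof.
move=> h; case: (classic (exists w, bnd 1 w /\ forall x, G x -> 1 <= ev 1 w x)) => [[w [hw hG]]|hn].
  left => v hv hGv; have [] // := h v w hv hw; by move=> x hx; split; [apply: hGv|apply: hG].
right => w hw hG; apply: hn; by exists w.
Qed.

Definition agree (v p : nat -> nat) N := forall n, n < N -> v n = p n.
Definition good q j (G : form -> Prop) phi p N := forall l, (forall x, In x l -> G x) ->
  exists v, bnd q v /\ agree v p N /\ (forall x, In x l -> j <= ev q v x) /\ ev q v phi < j.
Definition upd (p : nat -> nat) N k := fun n => if n == N then k else p n.

Lemma fin_choice (G : form -> Prop) (Q : nat -> list form -> Prop) m :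
 (forall k, k < m -> exists l, (forall x, In x l -> G x) /\ Q k l) ->
 exists L, (forall x, In x L -> G x) /\ forall k, k < m -> exists l, Q k l /\ incl l L.
Proof.
elim: m => [|m IH] h.
  by exists nil; split => // k.
have [L [hL hk]] : exists L, (forall x, In x L -> G x) /\ forall k, k < m -> exists l, Q k l /\ incl l L.
  by apply: IH => k hk; apply: h; lia.
have [l [hl hQ]] := h m (ltnSn m).
exists (L ++ l); split.
  by move=> x hx; case: (in_app_or _ _ _ hx) => ?; [apply: hL| apply: hl].
move=> k; rewrite ltnS leq_eqVlt => /orP [/eqP ->|hkm].
  exists l; split => //; exact: (incl_appr _ (incl_refl _)).
have [l' [hQ' hi]] := hk k hkm; exists l'; split => //; exact: (incl_appl _ hi).
Qed.

Lemma good_step q j G phi p N : good q j G phi p N -> exists k, k <= q /\ good q j G phi (upd p N k) N.+1.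
Proof.
move=> hg; apply: NNPP => hn.
have hk : forall k, k < q.+1 -> exists l, (forall x, In x l -> G x) /\
   ~ exists v, bnd q v /\ agree v (upd p N k) N.+1 /\ (forall x, In x l -> j <= ev q v x) /\ ev q v phi < j.
  move=> k hk; have : ~ good q j G phi (upd p N k) N.+1 by move=> h; apply: hn; exists k.
  move/not_all_ex_not => [l hl]; exists l; exact: imply_to_and hl.
have [L [hL hLk]] := fin_choice hk.
have [v [hv [ha [hs hphi]]]] := hg L hL.
have [l [hl hi]] := hLk (v N) (hv N).
apply: hl; exists v; split => //; split; last split => //.
- move=> n hn'; rewrite /upd; case: eqP => [->//|hne]; apply: ha; lia.
- by move=> x hx; apply: hs; apply: hi.
Qed.

Definition chooseK q j G phi p N : nat :=
  epsilon (inhabits 0) (fun k => k <= q /\ good q j G phi (upd p N k) N.+1).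

Fixpoint seqp q j G phi N : nat -> nat :=
  match N with 0 => fun _ => 0 | S M => upd (seqp q j G phi M) M (chooseK q j G phi (seqp q j G phi M) M) end.

Lemma seq_good q j G phi : good q j G phi (fun _ => 0) 0 -> forall N, good q j G phi (seqp q j G phi N) N.
Proof.
move=> h0; elim=> [//|N IH] /=.
have := epsilon_spec (inhabits 0) (fun k => k <= q /\ good q j G phi (upd (seqp q j G phi N) N k) N.+1) (good_step IH).
by case.
Qed.

Lemma seq_bnd q j G phi : good q j G phi (fun _ => 0) 0 -> forall N, seqp q j G phi N.+1 N <= q.
Proof.
move=> h0 N; rewrite /= /upd eqxx.
have := epsilon_spec (inhabits 0) (fun k => k <= q /\ good q j G phi (upd (seqp q j G phi N) N k) N.+1) (good_step (seq_good h0 N)).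
by case.
Qed.

Lemma seq_stable q j G phi N n : n < N -> seqp q j G phi N n = seqp q j G phi n.+1 n.
Proof.
elim: N => [//|N IH] hn.
have -> : seqp q j G phi N.+1 n = upd (seqp q j G phi N) N (chooseK q j G phi (seqp q j G phi N) N) n by [].
rewrite {1}/upd; case: eqP => [->|hne]; first by rewrite /= /upd eqxx.
apply: IH; lia.
Qed.

Lemma compact q j (G : form -> Prop) phi :
 (forall l : list form, (forall x, In x l -> G x) ->
    exists v, bnd q v /\ (forall x, In x l -> j <= ev q v x) /\ ev q v phi < j) ->
 exists v, bnd q v /\ (forall x, G x -> j <= ev q v x) /\ ev q v phi < j.
Proof.
move=> h.
have h0 : good q j G phi (fun _ => 0) 0.
  move=> l hl; have [v [hv [hs hp]]] := h l hl; by exists v.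
pose v := fun n => seqp q j G phi n.+1 n.
have hagree : forall N, agree v (seqp q j G phi N) N.
  move=> N n hn; rewrite /v; symmetry; exact: seq_stable.
exists v; split; first by move=> n; exact: seq_bnd.
split.
- move=> x hx; pose N := (maxn (maxvar x) (maxvar phi)).+1.
  have hg := seq_good h0 N; rewrite /good in hg.
  have [v' [hv' [ha [hs _]]]] := hg [:: x] (fun y hy => ltac:(case: hy => [<-//|[]])).
  rewrite (@ev_local q v v'); first by apply: hs; left.
  move=> n hn; have hnN : n < N by rewrite /N; lia.
  by rewrite (hagree N n hnN) (ha n hnN).
- pose N := (maxvar phi).+1.
  have hg := seq_good h0 N; rewrite /good in hg.
  have [v' [hv' [ha [_ hp]]]] := hg [::] (fun y hy => ltac:(case: hy)).
  rewrite (@ev_local q v v') // => n hn; have hnN : n < N by rewrite /N; lia.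
  by rewrite (hagree N n hnN) (ha n hnN).
Qed.

Lemma not_Lmat q j G phi : ~ Lmat q j G phi ->
  exists v, bnd q v /\ (forall x, G x -> j <= ev q v x) /\ ev q v phi < j.
Proof.
move=> h; apply: NNPP => hn; apply: h => v hv hG.
case: (leqP j (ev q v phi)) => // hlt; exfalso; apply: hn; by exists v.
Qed.

Lemma not_Lbar q j G phi : ~ Lbar q j G phi ->
  exists v w, bnd q v /\ bnd 1 w /\ (forall x, G x -> j <= ev q v x /\ 1 <= ev 1 w x) /\
     ~ (j <= ev q v phi /\ 1 <= ev 1 w phi).
Proof.
move=> h; apply: NNPP => hn; apply: h => v w hv hw hG; apply: NNPP => hc; apply: hn.
by exists v, w.
Qed.

Lemma Lmat_fin q j : finitary (Lmat q j).
Proof.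
move=> G phi h; apply: NNPP => hn.
have [v [hv [hG hp]]] : exists v, bnd q v /\ (forall x, G x -> j <= ev q v x) /\ ev q v phi < j.
  apply: compact => l hl; apply: not_Lmat => hm; apply: hn; by exists l.
have := h v hv hG; lia.
Qed.

Lemma bool_unsat_fin (G : form -> Prop) : (forall w, bnd 1 w -> ~ (forall x, G x -> 1 <= ev 1 w x)) ->
  exists l, (forall x, In x l -> G x) /\ forall w, bnd 1 w -> ~ (forall x, In x l -> 1 <= ev 1 w x).
Proof.
move=> hu; apply: NNPP => hn.
have [w [hw [hG _]]] : exists w, bnd 1 w /\ (forall x, G x -> 1 <= ev 1 w x) /\ ev 1 w bot < 1.
  apply: compact => l hl; apply: NNPP => hc; apply: hn; exists l; split => // w hw hs.
  apply: hc; exists w; split => //; split => //=; have := hw 0; lia.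
exact: (hu w hw hG).
Qed.

Lemma Lbar_fin q j : 0 < j <= q -> finitary (Lbar q j).
Proof.
move=> hj G phi h; case: (Lbar_char h) => [hm|hu].
  have [l [hl hm']] := Lmat_fin hm; exists l; split => //; exact: Lmat_Lbar.
have [l [hl hu']] := bool_unsat_fin hu; exists l; split => //.
move=> v w hv hw hs; exfalso; apply: (hu' w hw) => x hx; by have [] := hs x hx.
Qed.

Definition boolw q (v : nat -> nat) := fun n => if v n == q then 1 else 0.

Lemma bnd_boolw q v : bnd 1 (boolw q v).
Proof. by move=> n; rewrite /boolw; case: eqP. Qed.

Lemma ev_boolw q v f : (forall n, n <= maxvar f -> isB q (v n)) -> ev q v f = q * ev 1 (boolw q v) f.
Proof.
move=> h; rewrite -ev_bool; last exact: bnd_boolw.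
apply: ev_local => n hn; rewrite /boolw; move: (h n hn); rewrite /isB.
by case/orP => /eqP ->; case: eqP => //; lia.
Qed.

Definition excl q (psi : form) := npow q (vee psi (Neg psi)).
Definition jform j (chi : form) := nmult j (wedge chi (Neg chi)).

Lemma ev_npowq q v a : 0 < q -> ev q v a <= q -> ev q v (npow q a) = q * ev q v a - (q - 1) * q.
Proof. case: q => [//|Q] _ h; rewrite ev_npow //; lia. Qed.

Lemma ev_npow1 q w a : 0 < q -> ev 1 w a = 1 -> ev 1 w (npow q a) = 1.
Proof. case: q => [//|Q] _ h; rewrite ev_npow ?h //; nia. Qed.

Lemma ev_excl_isB q v psi : bnd q v -> 1 < q -> 0 < ev q v (excl q psi) -> isB q (ev q v psi).
Proof.
move=> hv hq; rewrite /excl ev_npowq; last by rewrite ev_vee //=; have := ev_le psi hv; lia.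
  2: lia.
rewrite ev_vee //=.
have := ev_le psi hv; rewrite /isB; set a := ev _ v psi => ha h.
apply/orP; apply: NNPP => hn.
have hm : maxn a (q - a) <= q - 1.
  have h0 : a <> 0 by move=> e; apply: hn; left; apply/eqP.
  have h1 : a <> q by move=> e; apply: hn; right; apply/eqP.
  lia.
move: h; nia.
Qed.

Lemma ev_excl_full q v psi : bnd q v -> 1 < q -> isB q (ev q v psi) -> ev q v (excl q psi) = q.
Proof.
move=> hv hq hb; rewrite /excl ev_npowq; last by rewrite ev_vee //=; have := ev_le psi hv; lia.
  2: lia.
rewrite ev_vee //=.
move: hb; rewrite /isB; case/orP => /eqP ->; nia.
Qed.

Lemma ev_excl_1 q w psi : bnd 1 w -> 1 < q -> ev 1 w (excl q psi) = 1.
Proof.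
move=> hw hq; rewrite /excl ev_npow1 //; first lia.
rewrite ev_vee //=; have := ev_le psi hw; lia.
Qed.

Lemma jform_nonbool q j v chi : bnd q v -> 0 < j -> j <= ev q v (jform j chi) -> 0 < ev q v chi < q.
Proof.
move=> hv hj; rewrite /jform ev_nmult; last by rewrite ev_wedge //= ; have := ev_le chi hv; lia.
rewrite ev_wedge //=; have := ev_le chi hv; case: (ev q v chi) => [|c] hc.
  nia.
case: (ltnP c.+1 q) => hcq; first lia.
have -> : c.+1 = q by lia. nia.
Qed.

Lemma jform_ge q j v chi : bnd q v -> j <= q -> 0 < ev q v chi < q -> j <= ev q v (jform j chi).
Proof.
move=> hv hj hc; rewrite /jform ev_nmult; last by rewrite ev_wedge //= ; have := ev_le chi hv; lia.
rewrite ev_wedge //=; nia.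
Qed.

Fixpoint maxl (l : list form) : nat :=
  match l with nil => 0 | f :: l => maxn (maxvar f) (maxl l) end.

Lemma maxl_ge f l : In f l -> maxvar f <= maxl l.
Proof. elim: l => [//|g l IH] /= [->|h]; first lia. have := IH h; lia. Qed.

Lemma minimal q j C : prime q -> 1 < q -> 0 < j <= q -> is_cons C -> cons_sub (Lmat q j) C ->
  validates_rule q j C -> cons_sub (Lbar q j) C.
Proof.
move=> pq hq hj hC hsub hrule G phi h.
case: (Lbar_char h) => [hm|hu]; first exact: hsub.
have [l [hl hu']] := bool_unsat_fin hu.
have hCc := hC; case: hCc => [hr [hm hc]].
have hcontra : forall v, bnd q v -> (forall x, In x l -> j <= ev q v x) ->
    (forall n, n <= maxl l -> isB q (v n)) -> False.
  move=> v hv hs hb; apply: (hu' (boolw q v) (bnd_boolw q v)) => x hx.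
  have := hs x hx; rewrite ev_boolw; first nia.
  move=> n hn; apply: hb; have := maxl_ge hx; lia.
pose chi := bigvee (List.map (fun p => wedge (Var p) (Neg (Var p))) (iota 0 (maxl l).+1)).
have hA : forall p, C (setOf l) (excl q (Var p)).
  move=> p; apply: (hc _ (setOf [:: jform j chi])).
    move=> x [<-|[]]; apply: hsub => v hv hs; apply: jform_ge => //; first lia.
    apply: NNPP => hn; apply: (hcontra v hv hs) => n hn'.
    rewrite /isB; apply/orP; apply: NNPP => hb; apply: hn.
    have hvn := hv n.
    have h1 : minn (v n) (q - v n) <= ev q v chi.
      have -> : minn (v n) (q - v n) = ev q v (wedge (Var n) (Neg (Var n))) by rewrite ev_wedge.
      apply: bigvee_ge => //; apply/in_map_iff; exists n; split => //.
      apply: In_mem; rewrite mem_iota; apply/andP; lia.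
    have h2 : ev q v chi <= q - 1.
      apply: bigvee_le => // y /in_map_iff [m [<- _]]; rewrite ev_wedge //=; have := hv m; lia.
    move: hb; case: eqP; case: eqP; try lia. 
  apply: (hm (setOf [:: jform j chi])); first by move=> x hx; right.
  exact: hrule.
apply: (hm (setOf l)) => //.
apply: (hc _ (fun x => exists p, x = excl q (Var p))).
  by move=> x [p ->].
apply: hsub => v hv hs; exfalso; apply: (hcontra v hv).
  by move=> x hx; apply: hs; left.
move=> n _; apply: (ev_excl_isB (psi := Var n) hv hq).
have := hs (excl q (Var n)) (or_intror (ex_intro _ n erefl)); lia.
Qed.

Lemma ev_ext q v1 v2 f : (forall n, v1 n = v2 n) -> ev q v1 f = ev q v2 f.
Proof. by move=> h; apply: ev_local => n _. Qed.

Definition sigA q (v w : nat -> nat) psi : nat -> form := fun x =>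
  if w x == 0 then nmult (v x) (eform q psi) else Neg (nmult (q - v x) (eform q psi)).

Lemma sigA_nonbool q v w v' psi f : prime q -> 1 < q -> bnd q v -> bnd 1 w -> bnd q v' ->
  0 < ev q v' psi < q -> ev q v' (subst (sigA q v w psi) f) = ev q v f.
Proof.
move=> pq hq hv hw hv' hp; rewrite ev_subst; apply: ev_ext => n; rewrite /sigA.
have he := ev_e_nonbool hv' pq hq hp.
case: eqP => _ /=; rewrite ev_nmult he; have := hv n; lia.
Qed.

Lemma sigA_bool q v w v' psi f : 1 < q -> bnd q v -> bnd 1 w -> bnd q v' ->
  isB q (ev q v' psi) -> ev q v' (subst (sigA q v w psi) f) = q * ev 1 w f.
Proof.
move=> hq hv hw hv' hp; rewrite ev_subst -ev_bool //; apply: ev_ext => n; rewrite /sigA.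
have he := ev_e_bool hv' hq hp.
have := hw n; case: eqP => [->|hn] /= hwn; rewrite ev_nmult he; nia.
Qed.

Lemma sigA_1 q v w w' psi f : 1 < q -> bnd q v -> bnd 1 w -> bnd 1 w' ->
  ev 1 w' (subst (sigA q v w psi) f) = ev 1 w f.
Proof.
move=> hq hv hw hw' ; rewrite ev_subst; apply: ev_ext => n; rewrite /sigA.
have he := ev_e_1 psi hw' hq.
have := hw n; case: eqP => [->|hn] /= hwn; rewrite ev_nmult he; lia.
Qed.

Lemma A_max q j prems concl : prime q -> 1 < q -> 0 < j <= q ->
  CPL (setOf prems) concl -> ~ Lbar q j (setOf prems) concl ->
  forall G phi, CPL G phi -> least_ext (Lbar q j) prems concl G phi.
Proof.
move=> pq hq hj hcpl hnot G phi hG C hC hsub hrule.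
have [v [w [hv [hw [hs hc]]]]] := not_Lbar hnot.
have hw1 : 1 <= ev 1 w concl by apply: hcpl => // x hx; case: (hs x hx).
have hvc : ev q v concl < j by case: (leqP j (ev q v concl)) => // ?; exfalso; apply: hc.
have hCc := hC; case: hCc => [hr [hm hcut]].
have step1 : forall (Gam : form -> Prop) psi, C Gam (subst (sigA q v w psi) concl).
  move=> Gam psi; apply: (hcut _ (setOf (List.map (subst (sigA q v w psi)) prems))).
    move=> x /in_map_iff [a [<- ha]]; apply: hsub => v' w' hv' hw' _.
    have [ha1 ha2] := hs a ha.
    rewrite sigA_1 //; split => //.
    case: (boolP (isB q (ev q v' psi))) => hb.
      rewrite sigA_bool //; nia.
    rewrite sigA_nonbool //; move: hb; rewrite /isB; have := ev_le psi hv'.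
    case: eqP; case: eqP; try lia.
  apply: (hm (setOf (List.map (subst (sigA q v w psi)) prems))); first by move=> x hx; right.
  exact: hrule.
have step2 : forall (Gam : form -> Prop) psi, C Gam (excl q psi).
  move=> Gam psi; apply: (hcut _ (setOf [:: subst (sigA q v w psi) concl])).
    by move=> x [<-|[]].
  apply: hsub => v' w' hv' hw' hD.
  have [hD1 _] := hD _ (or_intror (or_introl erefl)).
  rewrite ev_excl_1 //; split => //.
  case: (boolP (isB q (ev q v' psi))) => hb.
    rewrite ev_excl_full //; lia.
  exfalso; move: hD1; rewrite sigA_nonbool //; first lia.
  move: hb; rewrite /isB; have := ev_le psi hv'; case: eqP; case: eqP; try lia.
apply: (hcut _ (fun x => exists p, x = excl q (Var p))).
  by move=> x [p ->].
apply: hsub => v' w' hv' hw' hD.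
have hB : forall n, isB q (v' n).
  move=> n; apply: (ev_excl_isB (psi := Var n) hv' hq).
  have [] := hD (excl q (Var n)) (or_intror (ex_intro _ n erefl)); lia.
split.
- rewrite ev_boolw; last by move=> n _; apply: hB.
  have : 1 <= ev 1 (boolw q v') phi.
    apply: hG; first exact: bnd_boolw.
    move=> x hx; have [h1 _] := hD x (or_introl hx); move: h1.
    rewrite ev_boolw; [nia| by move=> n _; apply: hB].
  nia.
- apply: hG => // x hx; by have [] := hD x (or_introl hx).
Qed.

Definition sigB q (v : nat -> nat) phi0 : nat -> form := fun x => nmult (v x) (eform q phi0).

Lemma sigB_nonbool q v v' phi0 f : prime q -> 1 < q -> bnd q v -> bnd q v' ->
  0 < ev q v' phi0 < q -> ev q v' (subst (sigB q v phi0) f) = ev q v f.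
Proof.
move=> pq hq hv hv' hp; rewrite ev_subst; apply: ev_ext => n; rewrite /sigB.
have he := ev_e_nonbool hv' pq hq hp.
rewrite ev_nmult he; have := hv n; lia.
Qed.

Lemma B_max q j prems concl : prime q -> 1 < q -> 0 < j <= q ->
  Lbar q j (setOf prems) concl -> ~ Lmat q j (setOf prems) concl ->
  forall G phi, Lbar q j G phi -> least_ext (Lmat q j) prems concl G phi.
Proof.
move=> pq hq hj hbar hnot G phi hG C hC hsub hrule.
apply: (minimal pq hq hj hC hsub) => //.
move=> phi0 psi0.
have [v [hv [hs hc]]] := not_Lmat hnot.
have hCc := hC; case: hCc => [hr [hm hcut]].
have step1 : C (setOf [:: jform j phi0]) (subst (sigB q v phi0) concl).
  apply: (hcut _ (setOf (List.map (subst (sigB q v phi0)) prems))).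
    move=> x /in_map_iff [a [<- ha]]; apply: hsub => v' hv' hD.
    have hD1 := hD _ (or_introl erefl).
    have hnb := jform_nonbool hv' (proj1 (andP hj)) hD1.
    rewrite sigB_nonbool //; exact: hs.
  apply: (hm (setOf (List.map (subst (sigB q v phi0)) prems))); first by move=> x hx; right.
  exact: hrule.
apply: (hcut _ (setOf [:: subst (sigB q v phi0) concl])).
  by move=> x [<-|[]].
apply: hsub => v' hv' hD; exfalso.
have hD1 := hD _ (or_introl (or_introl erefl)).
have hnb := jform_nonbool hv' (proj1 (andP hj)) hD1.
have := hD _ (or_intror (or_introl erefl)); rewrite sigB_nonbool //; lia.
Qed.

Lemma least_ext_sub L1 L2 prems concl : is_cons L2 -> structural L2 -> cons_sub L1 L2 ->
  L2 (setOf prems) concl -> cons_sub (least_ext L1 prems concl) L2.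
Proof.
move=> hC hs hsub hr G phi h; apply: h => // s.
have hCc := hC; case: hCc => [_ [hm _]].
apply: (hm (Defs.image s (setOf prems))); last exact: hs.
move=> x [y [hy ->]]; exact: in_map.
Qed.

Theorem theorem5p7 (q j : nat) (hq : prime q) (hq1 : 1 < q) (hj0 : 0 < j) (hjq : j <= q) :
  (strongly_maximal (Lbar q j) CPL /\
   (is_cons (Lbar q j) /\ structural (Lbar q j) /\ finitary (Lbar q j) /\
    cons_sub (Lmat q j) (Lbar q j) /\ validates_rule q j (Lbar q j) /\
    forall C : cons_rel, is_cons C -> structural C -> finitary C ->
      cons_sub (Lmat q j) C -> validates_rule q j C -> cons_sub (Lbar q j) C)) /\
  strongly_maximal (Lmat q j) (Lbar q j).
Proof.
have hj : 0 < j <= q by rewrite hj0 hjq.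
have hval : validates_rule q j (Lbar q j).
  move=> phi psi v w hv hw hD; exfalso.
  have [_ h1] := hD _ (or_introl erefl); move: h1.
  rewrite ev_nmult; last by rewrite ev_wedge //=; have := ev_le phi hw; lia.
  rewrite ev_wedge //=; have := ev_le phi hw; lia.
split; [split; [split; [split|]|]|split; [split|]].
- exact: Lbar_CPL.
- move=> h.
  have := h (fun _ => False) (excl q (Var 0)).
  have hc : CPL (fun _ => False) (excl q (Var 0)).
    move=> v hv _; rewrite ev_excl_1 //.
  move=> /(_ hc) hb.
  have [h1 _] := hb (fun _ => 1) (fun _ => 0) (fun _ => ltnW hq1) (fun _ => leq0n _) (fun _ (f : False) => match f with end).
  move: h1; rewrite /excl ev_npowq /=; try nia; try lia.
- move=> prems concl h1 h2 G phi; split.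
    by move=> hl; apply: (least_ext_sub (@Lmat_cons 1 1) (@Lmat_struct 1 1) (Lbar_CPL hj) h1 hl).
  exact: A_max.
- split; first exact: Lbar_cons.
  split; first exact: Lbar_struct.
  split; first exact: Lbar_fin.
  split; first exact: Lmat_Lbar.
  split; first exact: hval.
  move=> C hC _ _ hs hr; exact: minimal.
- exact: Lmat_Lbar.
- move=> h.
  have := hval (Var 0) (Var 0); rewrite -/(jform j (Var 0)) -/(excl q (Var 0)) => hb.
  have := h _ _ hb (fun _ => 1) (fun _ => ltnW hq1).
  have hp : j <= ev q (fun _ => 1) (jform j (Var 0)) by apply: jform_ge; try (move=> n); rewrite /=; lia.
  move=> /(_ (fun x hx => ltac:(case: hx => [<-//|[]]))).
  rewrite /excl ev_npowq /=; try nia; try lia.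
- move=> prems concl h1 h2 G phi; split.
    by move=> hl; apply: (least_ext_sub (@Lbar_cons q j) (@Lbar_struct q j) (Lmat_Lbar hj) h1 hl).
  exact: B_max.
Qed.
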